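(* Let $q$ be a prime power, $\beta$ a primitive element of $\mathbb{F}_{q^2}$, $\mathrm{Tr}(x)=x+x^q$, and $\Psi:\mathbb{F}_{q^2}^n\to\mathbb{F}_q^{2n}$, $\Psi(\alpha_0,\ldots,\alpha_{n-1})=\left(\mathrm{Tr}(\beta\alpha_0),\ldots,\mathrm{Tr}(\beta\alpha_{n-1}),\mathrm{Tr}(\beta^q\alpha_0),\ldots,\mathrm{Tr}(\beta^q\alpha_{n-1})\right)$. Let $\mathscr{C}$ be an $\mathbb{F}_q$-linear additive conjucyclic code of length $n$ over $\mathbb{F}_{q^2}$, $\mathscr{D}=\Psi(\mathscr{C})$, and $\mathcal{H}(\mathscr{C})$ the largest $q$-ary cyclic code contained in $\mathscr{C}$. Then for any $\vec{d}=(d_0,\ldots,d_{2n-1})\in\mathscr{D}$, $\vec{d}\in\Psi(\mathcal{H}(\mathscr{C}))$ if and only if $d_i=d_{n+i}$ for all $0\leq i\leq n-1$.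
   Context: An $\mathbb{F}_q$-linear additive code of length $n$ over $\mathbb{F}_{q^2}$ is an $\mathbb{F}_q$-subspace of $\mathbb{F}_{q^2}^n$; it is conjucyclic if closed under $T(c_0,\ldots,c_{n-1})=(c_{n-1}^q,c_0,\ldots,c_{n-2})$. A $q$-ary cyclic code of length $n$ is an $\mathbb{F}_q$-subspace of $\mathbb{F}_q^n$ closed under the cyclic shift $(c_0,\ldots,c_{n-1})\mapsto(c_{n-1},c_0,\ldots,c_{n-2})$; here $\mathbb{F}_q^n\subseteq\mathbb{F}_{q^2}^n$. *)

(* Defs.v *)
From HB Require Import structures.
From mathcomp Require Import all_boot all_order all_algebra all_field.
Set Implicit Arguments. Unset Strict Implicit. Unset Printing Implicit Defensive.
Import GRing.Theory.
Local Open Scope ring_scope.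

Definition prime_power (q : nat) : Prop :=
  exists p k : nat, [/\ prime p, (0 < k)%N & q = (p ^ k)%N].

Section Defs.
Variables (L : finFieldType) (q : nat).

(* F_q as the subfield of L (with #|L| = q^2) fixed by x |-> x^q *)
Definition inFq (x : L) : bool := x ^+ q == x.

Definition Tr (x : L) : L := x + x ^+ q.

Variable n : nat.

Definition Fq_linear (C : {set 'rV[L]_n}) : Prop :=
  [/\ 0 \in C,
      {in C &, forall u v, u + v \in C} &
      forall a u, inFq a -> u \in C -> a *: u \in C].

(* conjucyclic shift T(c_0..c_{n-1}) = (c_{n-1}^q, c_0, ..., c_{n-2}) *)
Definition conj_shift (c : 'rV[L]_n) : 'rV[L]_n :=
  \row_i (if val i == 0%N then (c 0 (ord_pred i)) ^+ q else c 0 (ord_pred i)).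

Definition cyc_shift (c : 'rV[L]_n) : 'rV[L]_n :=
  \row_i c 0 (ord_pred i).

Definition conjucyclic_code (C : {set 'rV[L]_n}) : Prop :=
  Fq_linear C /\ {in C, forall c, conj_shift c \in C}.

Definition qary_cyclic_code (D : {set 'rV[L]_n}) : Prop :=
  [/\ (forall c, c \in D -> forall i : 'I_n, inFq (c 0 i)),
      Fq_linear D &
      {in D, forall c, cyc_shift c \in D}].

Definition largest_cyclic_in (C H : {set 'rV[L]_n}) : Prop :=
  [/\ qary_cyclic_code H, H \subset C &
      forall H' : {set 'rV[L]_n}, qary_cyclic_code H' -> H' \subset C -> H' \subset H].

Definition Psi (beta : L) (c : 'rV[L]_n) : 'rV[L]_(n + n) :=
  \row_(i < n + n) match split i with
                   | inl j => Tr (beta * c 0 j)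
                   | inr j => Tr (beta ^+ q * c 0 j)
                   end.

End Defs.

(* Main.v *)
Require Import Defs.
From HB Require Import structures.
From mathcomp Require Import all_boot all_order all_algebra all_field.
From mathcomp Require Import ring zify.
Import GRing.Theory.
Local Open Scope ring_scope.

Lemma frobq_add (q : nat) (L : finFieldType) :
  prime_power q -> #|L| = (q ^ 2)%N -> forall x y : L, (x + y) ^+ q = x ^+ q + y ^+ q.
Proof.
move=> [p [k [pp k0 ->]]] cardL x y.
have pc : p \in [pchar L].
  have cL : #|L| = (p ^ (k * 2))%N by rewrite cardL -expnM.
  exact: card_finPcharP cL pp.
apply: exprDn_pchar.
rewrite pnatX; apply/orP; left. by rewrite pnatE.
Qed.

Lemma q_gt0 q : prime_power q -> (0 < q)%N.
Proof. by move=> [p [k [pp k0 ->]]]; rewrite expn_gt0 prime_gt0. Qed.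

Lemma q_gt1 q : prime_power q -> (1 < q)%N.
Proof. move=> [p [k [pp k0 ->]]]; rewrite -[1%N](expn0 p) ltn_exp2l ?prime_gt1 //. Qed.

Lemma key (q : nat) (L : finFieldType) (beta c : L) :
  prime_power q -> #|L| = (q ^ 2)%N -> (q ^ 2 - 1)%N.-primitive_root beta ->
  (Tr q (beta * c) == Tr q (beta ^+ q * c)) = (c ^+ q == c).
Proof.
move=> pq cardL prim.
have bqq : (beta ^+ q) ^+ q = beta by rewrite -exprM mulnn -cardL expf_card.
have q1 := @q_gt1 q pq.
have bne : beta - beta ^+ q != 0.
  rewrite subr_eq0; apply/eqP => E.
  have b0 : beta != 0.
    apply/eqP => b0; move: (prim_expr_order prim); rewrite b0 expr0n.
    have -> : (q ^ 2 - 1 == 0)%N = false by apply/negbTE; lia.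
    by move/eqP; rewrite eq_sym oner_eq0.
  have E1 : beta ^+ (q - 1) = 1.
    apply: (mulfI b0); rewrite mulr1 -exprS.
    have -> : (q - 1).+1 = q by lia.
    by rewrite -E.
  move/eqP: E1; rewrite -(prim_order_dvd prim) => /dvdn_leq.
  have -> : (0 < q - 1)%N by lia.
  move=> /(_ isT) => H; nia.
rewrite /Tr !exprMn bqq.
have -> : (beta * c + beta ^+ q * c ^+ q == beta ^+ q * c + beta * c ^+ q)
   = ((beta - beta ^+ q) * (c - c ^+ q) == 0).
  rewrite -subr_eq0; congr (_ == 0); ring.
by rewrite mulf_eq0 (negbTE bne) /= subr_eq0 eq_sym.
Qed.

Lemma Psi_l (q : nat) (L : finFieldType) n beta (c : 'rV[L]_n) i :
  Psi q beta c 0 (lshift n i) = Tr q (beta * c 0 i).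
Proof. by rewrite mxE (unsplitK (inl i : 'I_n + 'I_n)). Qed.

Lemma Psi_r (q : nat) (L : finFieldType) n beta (c : 'rV[L]_n) i :
  Psi q beta c 0 (rshift n i) = Tr q (beta ^+ q * c 0 i).
Proof. by rewrite mxE (unsplitK (inr i : 'I_n + 'I_n)). Qed.

Theorem theorem3p14 (q : nat) (L : finFieldType) (n : nat) (beta : L)
    (C H : {set 'rV[L]_n}) :
  prime_power q ->
  #|L| = (q ^ 2)%N ->
  (q ^ 2 - 1)%N.-primitive_root beta ->
  conjucyclic_code q C ->
  largest_cyclic_in q C H ->
  forall d : 'rV[L]_(n + n), d \in [set Psi q beta c | c in C] ->
    (d \in [set Psi q beta c | c in H] <->
     forall i : 'I_n, d 0 (lshift n i) = d 0 (rshift n i)).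
Proof.
move=> pq cardL prim [[C0 CD CZ] shC] [[HF _ _] subHC maxH] d /imsetP[c cC ->].
split.
  move=> /imsetP[h hH ->] i; rewrite Psi_l Psi_r.
  by apply/eqP; rewrite key //; apply: HF.
move=> Heq.
have cF : forall i, c 0 i ^+ q = c 0 i.
  by move=> i; apply/eqP; rewrite -(@key q L beta (c 0 i) pq cardL prim) -Psi_l -Psi_r Heq.
set H' := [set x in C | [forall i, inFq q (x 0 i)]].
have q0 := @q_gt0 q pq.
have cH' : c \in H' by rewrite inE cC /=; apply/forallP => i; apply/eqP.
have : H' \subset H.
  apply: maxH; last by apply/subsetP => x; rewrite inE => /andP[].
  split.
  - by move=> x; rewrite inE => /andP[_ /forallP].
  - split.
    + rewrite inE C0 /=; apply/forallP => i; by rewrite /inFq mxE expr0n gtn_eqF.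
    + move=> u v; rewrite !inE => /andP[uC /forallP uF] /andP[vC /forallP vF].
      rewrite CD //=; apply/forallP => i; rewrite /inFq mxE (@frobq_add q L pq cardL).
      by rewrite (eqP (uF i)) (eqP (vF i)).
    + move=> a u aF; rewrite !inE => /andP[uC /forallP uF].
      rewrite CZ //=; apply/forallP => i; rewrite /inFq mxE exprMn.
      by rewrite (eqP aF) (eqP (uF i)).
  - move=> u; rewrite !inE => /andP[uC /forallP uF].
    have -> : cyc_shift u = conj_shift q u.
      apply/rowP => i; rewrite !mxE; case: ifP => // _.
      by rewrite (eqP (uF _)).
    rewrite shC //=; apply/forallP => i; rewrite /inFq !mxE.
    by case: ifP => _; rewrite (eqP (uF _)) ?(eqP (uF _)).
move=> /subsetP /(_ c cH') cH.
by apply/imsetP; exists c.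
Qed.
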